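(* Fix $M>0$. Then $$\alpha(M):=\inf_{T,u,v}\ \mathbb{P}\big(\tau_{u,+}^{X^{(T_{u,v},u)}}=\infty\big)>0,$$ where the infimum is over all trees $T$ which are $M$-bounded subdivisions of a tree with minimum degree at least $3$, and over all pairs of adjacent vertices $u\sim v$ in $T$.
   Context: A subdivision of a graph replaces each edge by a path of finite length; it is $M$-bounded if each such path has length at most $M$. For adjacent vertices $u\sim v$ of a tree $T$, $T_{u,v}$ is the connected component of $u$ in $T$ after removing $v$. $X^{(G,u)}$ denotes simple random walk on the (unweighted, undirected) graph $G$ started at $u$, and $\tau^{X^{(G,u)}}_{u,+}$ is its first return time to $u$ (first time $t\ge1$ at which it is at $u$). *)

(* Defs.v *)
From Stdlib Require Import Reals ClassicalEpsilon.
From Coquelicot Require Import Coquelicot.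
From mathcomp Require Import ssreflect ssrfun ssrbool eqtype ssrnat seq path.

Set Implicit Arguments.
Unset Strict Implicit.
Unset Printing Implicit Defensive.
Local Open Scope nat_scope.

Section Graphs.
Variable V : eqType.
Implicit Types (nb : V -> seq V).

Definition adj nb (x y : V) : bool := y \in nb x.

Definition simple_graph nb : Prop :=
  (forall x, uniq (nb x)) /\
  (forall x y, y \in nb x -> x \in nb y) /\
  (forall x, x \notin nb x).

Definition connected nb : Prop :=
  forall x y, exists p, path (adj nb) x p /\ last x p = y.

Definition acyclic nb : Prop :=
  forall x p, path (adj nb) x p -> last x p = x -> uniq p -> size p < 3.

Definition is_tree nb : Prop := simple_graph nb /\ connected nb /\ acyclic nb.

Definition pbool (P : Prop) : bool :=
  if excluded_middle_informative P then true else false.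

(* vertex set of T_{u,v}: the component of u in T after removing v *)
Definition in_comp nb (u v x : V) : Prop :=
  u != v /\
  exists p, path (fun a b => adj nb a b && (b != v)) u p /\ last u p = x.

(* neighbour lists of the induced subgraph T_{u,v} (meaningful on its vertices) *)
Definition comp_nbrs nb (u v : V) : V -> seq V :=
  fun x => [seq y <- nb x | pbool (in_comp nb u v y)].

(* noret nb u n x = P_x(X_1 <> u, ..., X_n <> u) for simple random walk on nb *)
Fixpoint noret nb (u : V) (n : nat) (x : V) : R :=
  match n with
  | O => 1%R
  | S n' => (/ INR (size (nb x)) *
             foldr Rplus 0%R
               (map (fun y => if y == u then 0%R else noret nb u n' y) (nb x)))%R
  end.

(* P(tau^{X^{(G,u)}}_{u,+} = infinity) = lim_n P(tau_{u,+} > n) *)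
Definition escape_prob nb (u : V) : Rbar :=
  Lim_seq (fun n => noret nb u n u).

End Graphs.

(* T (on V) is an M-bounded subdivision of S (on W): branch vertices phi a,
   and for each edge ab of S a path phi a, P a b, phi b in T of length <= M;
   these paths are internally disjoint, internal vertices are not branch
   vertices, and they cover all vertices and edges of T. *)
Definition bounded_subdivision (M : nat) (W V : eqType)
  (nbS : W -> seq W) (nbT : V -> seq V) : Prop :=
  exists (phi : W -> V) (P : W -> W -> seq V),
    injective phi /\
    (forall a b, b \in nbS a ->
       [/\ path (adj nbT) (phi a) (rcons (P a b) (phi b)),
           size (P a b) < M,
           P b a = rev (P a b),
           uniq (P a b) &
           forall x c, x \in P a b -> x != phi c]) /\
    (forall a b c d x, b \in nbS a -> d \in nbS c ->
       x \in P a b -> x \in P c d -> (a = c /\ b = d) \/ (a = d /\ b = c)) /\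
    (forall x, (exists a, x = phi a) \/
               (exists a b, b \in nbS a /\ x \in P a b)) /\
    (forall x y, y \in nbT x -> exists a b, b \in nbS a /\
       let s := phi a :: rcons (P a b) (phi b) in (x, y) \in zip s (behead s)).

(* Main.v *)
Require Import Defs.
From Stdlib Require Import Reals.
From Coquelicot Require Import Coquelicot.
From mathcomp Require Import ssreflect ssrfun ssrbool eqtype ssrnat seq path.
From Stdlib Require Import Lra Lia ClassicalEpsilon.
From mathcomp Require Import zify.

Set Implicit Arguments.
Unset Strict Implicit.
Unset Printing Implicit Defensive.

Module P1.


Lemma pboolP (P : Prop) : pbool P = true <-> P.
Proof. rewrite /pbool; case: excluded_middle_informative => //. Qed.

Lemma mem_zipP (T1 T2 : eqType) (s : seq T1) (t : seq T2) x y :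
  (x, y) \in zip s t -> x \in s /\ y \in t.
Proof.
elim: s t => [|a s IH] t; first by case: t.
case: t => [|b t] //=.
rewrite inE => /orP[/eqP[-> ->]|/IH[h1 h2]]; first by split; apply: mem_head.
by split; apply/orP; right.
Qed.

Section Tree.
Variable V : eqType.
Variable nb : V -> seq V.
Hypothesis Hs : simple_graph nb.
Hypothesis Hac : acyclic nb.
Local Notation e := (adj nb).

Lemma adj_sym x y : e x y = e y x.
Proof.
case: Hs => _ [Hsy _]; rewrite /adj.
by apply/idP/idP => /Hsy.
Qed.

Lemma enoloop x : e x x = false.
Proof. case: Hs => _ [_ H]; rewrite /adj; exact: negbTE (H x). Qed.

Lemma path_rev x s : path e x s ->
  path e (last x s) (rev (belast x s)) /\ last (last x s) (rev (belast x s)) = x.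
Proof.
move=> hp; split.
  rewrite rev_path; apply: sub_path hp => a b; by rewrite adj_sym.
case: s {hp} => [|y s] //=; by rewrite rev_cons last_rcons.
Qed.

Lemma sep a y y' s : y != y' -> e a y -> e a y' -> path e y s ->
  last y s = y' -> a \notin s -> False.
Proof.
move=> neq hay hay' hp hl has.
case: (shortenP hp) hl => s' hp' hu' hsub hl.
have hs'0 : s' != [::].
  apply/negP => /eqP h; move: hl; rewrite h /= => hl0.
  by move: neq; rewrite hl0 eqxx.
have hay0 : a != y by apply/negP => /eqP ha; move: hay; rewrite ha enoloop.
have := Hac (p := y :: rcons s' a) (x := a).
rewrite /= hay /= rcons_path hp' /= hl adj_sym hay' last_rcons.
move=> /(_ isT (erefl _)).
have hun : uniq (y :: rcons s' a).
  rewrite -cats1 -cat_cons cat_uniq hu' /= orbF andbT inE negb_or hay0 /=.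
  by apply/negP => /hsub; apply/negP.
move: hun => /= -> /=; rewrite size_rcons; case: s' hs'0 {hp' hu' hsub hl} => // ? ? _; by move/(_ isT).
Qed.

Lemma upath a p q : path e a p -> path e a q -> last a p = last a q ->
  uniq (a :: p) -> uniq (a :: q) -> p = q.
Proof.
elim: p a q => [|y p IH] a [|y' q] //=.
- move=> _ _ hl _ /andP[hn _]; move: hn; by rewrite hl mem_last.
- move=> _ _ hl /andP[hn _]; move: hn; by rewrite -hl mem_last.
move=> /andP[hay hp] /andP[hay' hq] hl /andP[hna hu] /andP[hna' hu'].
case: (eqVneq y y') => [eyy|neq].
  subst y'; congr (_ :: _); exact: IH hp hq hl hu hu'.
exfalso.
have [hr1 hr2] := path_rev hq.
apply: (sep (a := a) (y := y) (y' := y') (s := p ++ rev (belast y' q)) neq hay hay').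
- by rewrite cat_path hp /= hl.
- by rewrite last_cat hl.
- rewrite mem_cat negb_or; apply/andP; split.
    by move: hna; rewrite inE negb_or => /andP[].
  rewrite mem_rev; apply/negP => /mem_belast; exact/negP.
Qed.

Variables u v : V.
Hypothesis Huv : v \in nb u.
Definition ev a b := e a b && (b != v).

Lemma uneqv : u != v.
Proof. apply/negP => /eqP h; move: Huv; rewrite -h; exact: (negP (proj2 (proj2 Hs) u)). Qed.

Lemma evpath_e a s : path ev a s -> path e a s.
Proof. apply: sub_path => x y /andP[]. by []. Qed.

Lemma evpath_v a s : path ev a s -> v \notin s.
Proof.
elim: s a => [|y s IH] a //= /andP[/andP[_ hy] hp].
by rewrite inE negb_or eq_sym hy (IH _ hp).
Qed.

Definition Pth x s := path ev u s /\ last u s = x /\ uniq (u :: s).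

Lemma comp_Pth x : in_comp nb u v x -> exists s, Pth x s.
Proof.
move=> [_ [p [hp hl]]].
case: (shortenP hp) hl => s' hp' hu' _ hl.
by exists s'.
Qed.

Lemma Pth_comp x s : Pth x s -> in_comp nb u v x.
Proof. move=> [hp [hl _]]; split; first exact: uneqv. by exists s. Qed.

Definition pi x : seq V :=
  match excluded_middle_informative (exists s, Pth x s) with
  | left H => proj1_sig (constructive_indefinite_description _ H)
  | right _ => [::]
  end.

Lemma piP x : in_comp nb u v x -> Pth x (pi x).
Proof.
move=> /comp_Pth H; rewrite /pi; case: excluded_middle_informative => // H'.
by case: constructive_indefinite_description.
Qed.

Lemma pi_eq x s : Pth x s -> pi x = s.
Proof.
move=> hs; have := piP (Pth_comp hs); case: hs => hp [hl hu] [hp' [hl' hu']].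
apply: (upath (a := u)) => //; try exact: evpath_e. by rewrite hl hl'.
Qed.

Lemma comp_ext x y : in_comp nb u v x -> y \in nb x -> y != v -> in_comp nb u v y.
Proof.
move=> [h [p [hp hl]]] hy hyv; split => //; exists (rcons p y).
by rewrite rcons_path hp hl /ev /adj hy hyv last_rcons.
Qed.

Lemma comp_notv x : in_comp nb u v x -> x != u -> v \notin nb x.
Proof.
move=> hc hxu; have [hp [hl hu]] := piP hc.
apply/negP => hv.
have hpi : pi x != [::] by apply/negP => /eqP h; move: hl; rewrite h /= => hh; move/eqP: hxu; rewrite hh.
have := Hac (x := v) (p := u :: rcons (pi x) v).
rewrite /= last_rcons rcons_path (evpath_e hp) hl /adj hv andbT.
have -> : u \in nb v.
  by case: Hs => _ [Hsy _]; apply: Hsy.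
move=> /(_ isT (erefl _)).
have hun : uniq (u :: rcons (pi x) v).
  rewrite -cats1 -cat_cons cat_uniq hu /= orbF andbT inE negb_or eq_sym uneqv /=.
  exact: evpath_v hp.
by move=> /(_ hun); rewrite size_rcons; case: (pi x) hpi.
Qed.

Lemma back a r x y : path e a (rcons r x) -> uniq (a :: rcons r x) ->
  y \in a :: r -> y != last a r -> e x y -> False.
Proof.
move=> hp hu hy hyl hxy.
have [s1 [s2 hsp]] : exists s1 s2, a :: r = s1 ++ y :: s2.
  by case/splitPr: hy => s1 s2; exists s1, s2.
have hfull : a :: rcons r x = s1 ++ y :: rcons s2 x.
  by rewrite -rcons_cons hsp rcons_cat.
have hs2 : s2 != [::].
  apply/negP => /eqP h; subst s2; move: hyl.
  by rewrite -(last_cons a a r) hsp last_cat /= eqxx.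
have hu2 : uniq (y :: rcons s2 x).
  by move: hu; rewrite hfull cat_uniq => /andP[_ /andP[_ ->]].
have hp2 : path e y (rcons s2 x).
  case: s1 hsp hfull => [|a' s1'] /= hsp hfull.
    by case: hfull hp => -> ->.
  by case: hfull hp => _ ->; rewrite cat_path => /andP[_] /= /andP[_ ->].
have := Hac (x := y) (p := rcons (rcons s2 x) y).
rewrite rcons_path hp2 !last_rcons hxy => /(_ isT (erefl _)).
rewrite rcons_uniq.
move: hu2 => /= /andP[-> ->] /(_ isT).
by rewrite !size_rcons; case: s2 hs2 {hsp hfull hp2 hyl}.
Qed.

Lemma pi_u : pi u = [::].
Proof. apply: pi_eq; split => //; split => //. Qed.

Lemma pi_child_u y : y \in nb u -> y != v -> pi y = [:: y].
Proof.
move=> hy hyv; apply: pi_eq; split; first by rewrite /= /ev /adj hy hyv.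
split => //=; rewrite inE andbT.
apply/negP => /eqP h; move: hy; rewrite -h; exact: (negP (proj2 (proj2 Hs) u)).
Qed.

Lemma parent_struct x : in_comp nb u v x -> x != u ->
  exists r, [/\ pi x = rcons r x, Pth (last u r) r, last u r \in nb x,
    last u r != v &
    forall y, y \in nb x -> y != last u r -> pi y = rcons (pi x) y].
Proof.
move=> hc hxu; have hP := piP hc.
have hpi : pi x != [::].
  apply/negP => /eqP h; move: hP => [_ [hl _]]; move: hl; rewrite h /= => hh.
  by move/eqP: hxu; rewrite hh.
case Epi : (pi x) hpi hP => [|y0 s0] // _ [hp [hl hu]].
move: hp hl hu; rewrite (lastI y0 s0) last_rcons => hp hl hu.
rewrite -hl; set r := belast y0 s0; set x' := last y0 s0.
have hnv := evpath_v hp.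
move: hp; rewrite rcons_path => /andP[hpr /andP[hex hxv]].
have hur : uniq (u :: r) by move: hu; rewrite -rcons_cons rcons_uniq => /andP[].
exists r; split => //.
- by change (e x' (last u r)); rewrite adj_sym.
- apply/negP => /eqP h; have := mem_last u r; rewrite h inE (negbTE (evpath_v hpr)) orbF.
  by move/eqP => hh; move: uneqv; rewrite hh eqxx.
move=> y hy hyp.
have hxv' : v \notin nb x' by rewrite /x' hl; apply: comp_notv.
have hyv : y != v by apply/negP => /eqP h; move: hy; rewrite h (negbTE hxv').
apply: pi_eq; split; last split.
- rewrite rcons_path.
  apply/andP; split; first by rewrite rcons_path hpr /ev hex hxv.
  by rewrite last_rcons /ev /adj hy hyv.
- by rewrite last_rcons.
rewrite -rcons_cons rcons_uniq hu andbT.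
apply/negP; rewrite -rcons_cons mem_rcons inE => /orP[/eqP hyx|hy'].
  subst y; move: hy; exact: (negP (proj2 (proj2 Hs) _)).
apply: (back (a := u) (r := r) (x := x') (y := y)) => //.
- by apply: evpath_e; rewrite rcons_path hpr /ev hex hxv.
Qed.


End Tree.

End P1.
Import P1.
Module P2.
Local Open Scope nat_scope.


Section GW.
Variable V : eqType.
Variable f : V -> bool.
Local Open Scope R_scope.

Fixpoint gw (c : nat) (prev : V) (r : seq V) : R :=
  match r with
  | [::] => 0
  | y :: r' => (/2) ^ (c + f prev) + gw (c + f prev) y r'
  end.

Lemma gw_rcons c prev r y :
  gw c prev (rcons r y) = gw c prev r + (/2) ^ (c + count f (prev :: r)).
Proof.
elim: r c prev => [|z r IH] c prev /=.
  have -> : (c + (f prev + 0))%N = (c + f prev)%N by lia.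
  lra.
rewrite IH /=.
have -> : (c + (f prev + (f z + count f r)))%N = (c + f prev + (f z + count f r))%N by lia.
lra.
Qed.

Fixpoint okr (M k : nat) (r : seq V) : bool :=
  match r with
  | [::] => true
  | y :: r' => if f y then okr M 0 r' else ((k.+1 < M)%N) && okr M k.+1 r'
  end.

Lemma gw_bound M r c prev k : (0 < M)%N -> (f prev -> k = 0%N) -> (~~ f prev -> (0 < k < M)%N) ->
  okr M k r ->
  gw c prev r <= (if f prev then INR M else 2 * INR M - INR k) * (/2) ^ c.
Proof.
move=> hM1; elim: r c prev k => [|y r IH] c prev k hph hnph /=.
  move=> _; have hq : 0 < (/2) ^ c by apply: pow_lt; lra.
  case Ep : (f prev); first by apply: Rmult_le_pos; [apply: pos_INR|lra].
  have [h1 h2] : (0 < k)%N /\ (k < M)%N by apply/andP; apply: hnph; rewrite Ep.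
  have : (INR k <= INR M) by apply: le_INR; lia.
  move=> hk; have := pos_INR M => hM0; apply: Rmult_le_pos; lra.
have hq : 0 < (/2) ^ c by apply: pow_lt; lra.
case Ep : (f prev).
- rewrite (hph Ep) /= => hok.
  have HM : 1 <= INR M by apply: (le_INR 1); move/ltP: hM1.
  have hIH : gw (c + 1) y r <= (2 * INR M - 1) * (/2) ^ (c + 1).
    case Ey: (f y) hok => hok.
      have := IH (c+1)%N y 0%N; rewrite Ey => /(_ (fun _ => erefl) (fun h => ltac:(by move: h)) hok) h.
      apply: Rle_trans h _; apply: Rmult_le_compat_r; [apply: pow_le; lra|lra].
    move/andP: hok => [h1 hok].
    have := IH (c+1)%N y 1%N; rewrite Ey => /(_ (fun h => ltac:(by move: h)) (fun _ => ltac:(lia)) hok) h.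
    apply: Rle_trans h _; apply: Rmult_le_compat_r; [apply: pow_le; lra|simpl INR; lra].
  rewrite pow_add /= in hIH *; nra.
- rewrite addn0 => hok.
  have [h1 h2] : (0 < k)%N /\ (k < M)%N by apply/andP; apply: hnph; rewrite Ep.
  have hk : INR k + 1 <= INR M by rewrite -S_INR; apply: le_INR; lia.
  case Ey: (f y) hok => hok.
    have := IH c y 0%N; rewrite Ey => /(_ (fun _ => erefl) (fun h => ltac:(by move: h)) hok).
    nra.
  move/andP: hok => [h3 hok].
  have := IH c y k.+1; rewrite Ey => /(_ (fun h => ltac:(done)) (fun _ => ltac:(lia)) hok).
  rewrite S_INR; nra.
Qed.

End GW.

Section Sub.
Variables (M : nat) (W V : eqType) (nbS : W -> seq W) (nbT : V -> seq V).
Variables (phi : W -> V) (P : W -> W -> seq V).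
Hypothesis HsS : simple_graph nbS.
Hypothesis HdS : forall a, 3 <= size (nbS a).
Hypothesis HsT : simple_graph nbT.
Hypothesis Hinj : injective phi.
Hypothesis H1 : forall a b, b \in nbS a ->
       [/\ path (adj nbT) (phi a) (rcons (P a b) (phi b)),
           size (P a b) < M,
           P b a = rev (P a b),
           uniq (P a b) &
           forall x c, x \in P a b -> x != phi c].
Hypothesis H2 : forall a b c d x, b \in nbS a -> d \in nbS c ->
       x \in P a b -> x \in P c d -> (a = c /\ b = d) \/ (a = d /\ b = c).
Hypothesis H3 : forall x, (exists a, x = phi a) \/
               (exists a b, b \in nbS a /\ x \in P a b).
Hypothesis H4 : forall x y, y \in nbT x -> exists a b, b \in nbS a /\
       let s := phi a :: rcons (P a b) (phi b) in (x, y) \in zip s (behead s).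

Definition isphi (x : V) : bool := pbool (exists a, x = phi a).

Lemma isphi_phi a : isphi (phi a).
Proof. by apply/pboolP; exists a. Qed.

Lemma nonphi_P a b x : b \in nbS a -> x \in P a b -> isphi x = false.
Proof.
move=> hb hx; apply/negP => /pboolP [c hc].
have [_ _ _ _ h] := H1 hb; move: (h x c hx); by rewrite hc eqxx.
Qed.

Lemma cover x : isphi x = false -> exists a b, b \in nbS a /\ x \in P a b.
Proof.
move=> hx; case: (H3 x) => // [[a ha]].
by move: hx; rewrite ha isphi_phi.
Qed.

Lemma S_noloop a : a \notin nbS a.
Proof. by case: HsS => _ [_ ->]. Qed.

Lemma in_s_P a b z : z \in phi a :: rcons (P a b) (phi b) -> isphi z = false ->
  z \in P a b.
Proof.
rewrite inE mem_rcons inE => /orP[/eqP ->|/orP[/eqP ->|//]]; by rewrite isphi_phi.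
Qed.

Lemma Lseg a b x y : b \in nbS a -> x \in P a b -> isphi y = false ->
  y \in nbT x -> y \in P a b.
Proof.
move=> hb hx hy hxy.
have [a' [b' [hb' hz]]] := H4 hxy.
have [hxs hys] := mem_zipP hz.
have hxs' : x \in P a' b'.
  by apply: in_s_P hxs _; exact: nonphi_P hb hx.
have hys' : y \in P a' b'.
  apply: in_s_P _ hy; move: hys; case: (phi a' :: _) => //= w s hs.
  by rewrite inE hs orbT.
case: (H2 hb hb' hx hxs') => [[ea eb]|[ea eb]]; subst a' b' => //.
have [_ _ hr _ _] := H1 hb. by move: hys'; rewrite hr mem_rev.
Qed.

Lemma deg_phi a : 3 <= size (nbT (phi a)).
Proof.
pose f b := head (phi b) (P a b).
apply: leq_trans (HdS a) _.
rewrite -(size_map f); apply: uniq_leq_size.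
  rewrite map_inj_in_uniq; first by case: HsS.
  move=> b b' hb hb'; rewrite /f.
  case Eb : (P a b) => [|z s]; case Eb' : (P a b') => [|z' s'] /=.
  - exact: Hinj.
  - move=> hz; have : z' \in P a b' by rewrite Eb' mem_head.
    by move/(nonphi_P hb'); rewrite -hz isphi_phi.
  - move=> hz; have : z \in P a b by rewrite Eb mem_head.
    by move/(nonphi_P hb); rewrite hz isphi_phi.
  - move=> hz; have h1 : z \in P a b by rewrite Eb mem_head.
    have h2 : z \in P a b' by rewrite Eb' hz mem_head.
    case: (H2 hb hb' h1 h2) => [[_ ->] //|[ea eb]].
    by move: hb; rewrite -ea eb; move: (S_noloop a) => /negP.
move=> z /mapP [b hb ->]; rewrite /f.
have [hp _ _ _ _] := H1 hb.
by case: (P a b) hp => [|z' s] /= /andP[].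
Qed.

Lemma two_le (T : eqType) (s : seq T) x y : x \in s -> y \in s -> x != y -> 2 <= size s.
Proof.
move=> hx hy hxy; have : size [:: x; y] <= size s.
  apply: uniq_leq_size; first by rewrite /= inE hxy.
  by move=> z; rewrite !inE => /orP[/eqP->//|]; rewrite ?orbF => /eqP->.
by [].
Qed.

Lemma Tsym x y : y \in nbT x -> x \in nbT y.
Proof. by case: HsT => _ [h _]; apply: h. Qed.

Lemma deg_nonphi x : isphi x = false -> 2 <= size (nbT x).
Proof.
move=> hx; have [a [b [hb hxP]]] := cover hx.
have [hp _ _ hu _] := H1 hb.
have [l1 [l2 E]] : exists l1 l2, P a b = l1 ++ x :: l2.
  by case/splitPr: hxP => l1 l2; exists l1, l2.
move: hp hu; rewrite E => hp hu.
move: hp; rewrite rcons_cat /= cat_path => /andP[_] /= /andP[hprev hnext].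
set prev := last (phi a) l1 in hprev.
set nxt := head (phi b) l2.
have hn : adj nbT x nxt by rewrite /nxt; case: (l2) hnext => [|z s] /= /andP[].
apply: (two_le (x := prev) (y := nxt)).
- exact: Tsym.
- exact: hn.
have hprevm : prev \in phi a :: l1 by apply: mem_last.
have hnxtm : nxt \in phi b :: l2 by rewrite /nxt; case: (l2) => [|z s] /=; rewrite !inE eqxx ?orbT.
have hnab : phi a != phi b.
  apply/negP => /eqP /Hinj hab; move: hb; rewrite -hab; by move: (S_noloop a) => /negP.
move: hprevm hnxtm; rewrite !inE => /orP[/eqP ->|hl1] /orP[/eqP ->|hl2] //.
- apply/negP => /eqP hh; have : phi a \in P a b by rewrite E mem_cat inE hh hl2 !orbT.
  by move/(nonphi_P hb); rewrite isphi_phi.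
- apply/negP => /eqP hh; have : phi b \in P a b by rewrite E mem_cat -hh hl1.
  by move/(nonphi_P hb); rewrite isphi_phi.
- apply/negP => /eqP hh; move: hu; rewrite cat_uniq => /and3P[_ /hasPn hd _].
  by move: (hd nxt); rewrite inE hl2 orbT -hh hl1 => /(_ isT).
Qed.

Lemma okrun_path r prev (run : seq V) :
  (isphi prev -> run = [::]) ->
  (~~ isphi prev -> prev \in run /\ exists a b, b \in nbS a /\ {subset run <= P a b}) ->
  uniq (run ++ r) -> path (adj nbT) prev r -> okr isphi M (size run) r.
Proof.
elim: r prev run => [|y r IH] prev run //= hph hnph hu /andP[hadj hp].
case Ey : (isphi y).
  apply: (IH y [::]) => //; first by rewrite Ey.
  by move: hu; rewrite cat_uniq => /and3P[_ _ /andP[]].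
have [a [b [hb hsub]]] : exists a b, b \in nbS a /\ {subset rcons run y <= P a b}.
  case Ep : (isphi prev).
    rewrite (hph Ep); have [a [b [hb hy]]] := cover Ey.
    by exists a, b; split => // z; rewrite /= inE => /eqP ->.
  have [hpr [a [b [hb hs]]]] := hnph (negbT Ep).
  exists a, b; split => // z; rewrite mem_rcons inE => /orP[/eqP ->|/hs //].
  exact: Lseg hb (hs _ hpr) Ey hadj.
have hu' : uniq (rcons run y ++ r) by rewrite cat_rcons.
have hsz : size (rcons run y) <= size (P a b).
  apply: uniq_leq_size hsub.
  by move: hu'; rewrite cat_uniq => /andP[].
have [_ hM _ _ _] := H1 hb.
rewrite size_rcons in hsz.
apply/andP; split; first exact: leq_ltn_trans hsz hM.
rewrite -(size_rcons run y); apply: (IH y) => //; first by rewrite Ey.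
move=> _; split; first by rewrite mem_rcons mem_head.
by exists a, b.
Qed.

End Sub.


End P2.
Import P2.
Module P3.


Section Sums.
Variable T : eqType.
Local Open Scope R_scope.
Definition sumR (F : T -> R) (s : seq T) := foldr Rplus 0 (map F s).

Lemma sumR_le F G s : (forall y, y \in s -> F y <= G y) -> sumR F s <= sumR G s.
Proof.
elim: s => [|y s IH] /= h; rewrite /sumR /=; first lra.
have h1 := h y (mem_head _ _).
have h2 : sumR F s <= sumR G s by apply: IH => z hz; apply: h; rewrite inE hz orbT.
rewrite /sumR in h2; lra.
Qed.

Lemma sumR_rem F s p : p \in s -> sumR F s = F p + sumR F (rem p s).
Proof.
elim: s => [|y s IH] //= hp.
case: (eqVneq y p) => [->|hne]; first by rewrite /sumR /= ?eqxx /=; lra.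
have hp' : p \in s by move: hp; rewrite inE eq_sym (negbTE hne).
rewrite /sumR /=; rewrite /sumR in IH; rewrite (IH hp'); lra.
Qed.

Lemma sumR_const_ge F s c : (forall y, y \in s -> c <= F y) -> INR (size s) * c <= sumR F s.
Proof.
elim: s => [|y s IH] h; first by rewrite /sumR /=; lra.
have -> : INR (size (y :: s)) = INR (size s) + 1 by rewrite -S_INR.
rewrite /sumR /=.
have h1 := h y (mem_head _ _).
have h2 : INR (size s) * c <= sumR F s by apply: IH => z hz; apply: h; rewrite inE hz orbT.
rewrite /sumR in h2; lra.
Qed.

Lemma sumR_scale F s k : sumR (fun y => F y * k) s = sumR F s * k.
Proof. elim: s => [|y s IH] /=; rewrite /sumR /=; first lra. rewrite /sumR in IH; rewrite IH; lra. Qed.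

End Sums.

Section Main.
Variables (M : nat) (W V : eqType) (nbS : W -> seq W) (nbT : V -> seq V).
Variables (phi : W -> V) (P : W -> W -> seq V).
Hypothesis hM : (0 < M)%N.
Hypothesis HsS : simple_graph nbS.
Hypothesis HdS : forall a, (3 <= size (nbS a))%N.
Hypothesis HsT : simple_graph nbT.
Hypothesis HacT : acyclic nbT.
Hypothesis Hinj : injective phi.
Hypothesis H1 : forall a b, b \in nbS a ->
       [/\ path (adj nbT) (phi a) (rcons (P a b) (phi b)),
           (size (P a b) < M)%N,
           P b a = rev (P a b),
           uniq (P a b) &
           forall x c, x \in P a b -> x != phi c].
Hypothesis H2 : forall a b c d x, b \in nbS a -> d \in nbS c ->
       x \in P a b -> x \in P c d -> (a = c /\ b = d) \/ (a = d /\ b = c).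
Hypothesis H3 : forall x, (exists a, x = phi a) \/
               (exists a b, b \in nbS a /\ x \in P a b).
Hypothesis H4 : forall x y, y \in nbT x -> exists a b, b \in nbS a /\
       let s := phi a :: rcons (P a b) (phi b) in (x, y) \in zip s (behead s).
Variables u v : V.
Hypothesis Huv : v \in nbT u.

Local Notation ph := (isphi phi).
Local Open Scope R_scope.

Definition G x := gw ph 0 u (pi nbT u v x).

Lemma deg2 x : (2 <= size (nbT x))%N.
Proof.
case E: (ph x).
  move/pboolP: E => [a ->]; have := deg_phi HsS HdS Hinj H1 H2 a; lia.
have := @deg_nonphi M W V nbS nbT phi P HsS HsT Hinj H1 H3 x E. done.
Qed.

Lemma M_gt1 : ph u = false -> (1 < M)%N.
Proof.
move=> hu; have [a [b [hb hub]]] := cover H3 hu.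
have [_ hs _ _ _] := H1 hb.
have : (0 < size (P a b))%N by case: (P a b) hub.
lia.
Qed.

Lemma G_bound x : in_comp nbT u v x -> G x <= 2 * INR M.
Proof.
move=> hc; have [hp [hl hu]] := piP hc.
pose run := if ph u then [::] else [:: u].
have hok := okrun_path H1 H2 H3 H4 (r := pi nbT u v x) (prev := u) (run := run).
have hok' : okr ph M (size run) (pi nbT u v x).
  apply: hok; last exact: evpath_e hp.
  - by rewrite /run => ->.
  - rewrite /run => /negbTE h; rewrite h; split; first by rewrite mem_head.
    have [a [b [hb hub]]] := cover H3 h.
    by exists a, b; split => // z; rewrite inE => /eqP ->.
  - rewrite /run; case: (ph u) => //. by move: hu => /andP[].
have := gw_bound 0 hM (f := ph) (prev := u) (k := size run) _ _ hok'.
have hM0 := pos_INR M.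
rewrite /G /run; case E : (ph u) => /=.
- move=> /(_ (fun _ => erefl) (fun h => ltac:(by move: h))) h. lra.
- have h1 := M_gt1 E.
  have hk : (0 < 1 < M)%N by rewrite h1.
  move=> /(_ (fun h => ltac:(by move: h)) (fun _ => hk)) h. simpl INR in h. lra.
Qed.

Lemma Gu : G u = 0.
Proof. by rewrite /G (pi_u HsT HacT Huv). Qed.

Lemma comp_u : in_comp nbT u v u.
Proof. split. exact: (uneqv HsT Huv). by exists [::]. Qed.

Lemma v_notcomp : ~ in_comp nbT u v v.
Proof.
move=> [_ [p [hp hl]]].
have hp' : path (ev nbT v) u p by [].
have hv := evpath_v hp'.
case: p hp hl hp' hv => [|y p] /=.
  by move=> _ huv; move: (uneqv HsT Huv); rewrite huv eqxx.
move=> _ hl _; have := mem_last y p; rewrite hl => ->.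
by [].
Qed.

Lemma comp_full x : in_comp nbT u v x -> x != u -> comp_nbrs nbT u v x = nbT x.
Proof.
move=> hc hxu; rewrite /comp_nbrs; apply/all_filterP; apply/allP => y hy.
apply/pboolP; apply: (comp_ext hc hy).
apply/negP => /eqP hyv; move: (comp_notv HsT HacT Huv hc hxu); by rewrite -hyv hy.
Qed.

Lemma sum_ineq x : in_comp nbT u v x -> x != u ->
  INR (size (nbT x)) * G x <= sumR G (nbT x).
Proof.
move=> hc hxu.
have [r [hpi hPr hpn hpv hch]] := parent_struct HsT HacT Huv hc hxu.
set p := last u r in hPr hpn hpv hch.
set w := (/2) ^ (count ph (u :: r)).
set h := (/2) ^ (ph x).
have hGp : G x = G p + w.
  by rewrite /G hpi (pi_eq HsT HacT Huv hPr) gw_rcons add0n.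
have huq : uniq (nbT x) by case: HsT.
have hGc : forall y, y \in rem p (nbT x) -> G y = G x + w * h.
  move=> y; rewrite (mem_rem_uniq _ huq) inE => /andP[hyp hy].
  rewrite {1}/G (hch y hy hyp) gw_rcons add0n -/(G x) hpi.
  by rewrite -rcons_cons -cats1 count_cat /= addn0 pow_add.
rewrite (sumR_rem G hpn).
have := sumR_const_ge (F := G) (s := rem p (nbT x)) (c := G x + w * h).
move=> /(_ (fun y hy => Req_le _ _ (esym (hGc y hy)))).
rewrite size_rem // => hs.
have hd := deg2 x.
have hw : 0 < w by apply: pow_lt; lra.
have hn : INR (size (nbT x)).-1 = INR (size (nbT x)) - 1.
  have e : size (nbT x) = (size (nbT x)).-1.+1 by lia.
  rewrite {2}e S_INR; lra.
rewrite hn in hs.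
have hh : (ph x -> h = /2) /\ (ph x = false -> h = 1).
  rewrite /h; case: (ph x) => /=; split => // _; ring.
case E : (ph x) in hh.
- have h3 : (3 <= size (nbT x))%N.
    by move/pboolP: E => [a ->]; apply: deg_phi HsS HdS Hinj H1 H2 a.
  have := le_INR _ _ (elimT leP h3); have -> : INR 3 = 3 by simpl; ring.
  rewrite (proj1 hh isT) in hs; nra.
- have := le_INR _ _ (elimT leP hd); have -> : INR 2 = 2 by simpl; ring.
  rewrite (proj2 hh erefl) in hs; nra.
Qed.

Lemma KM : 0 < 2 * INR M.
Proof. have := lt_0_INR M (elimT ltP hM); lra. Qed.

Lemma claim n x : in_comp nbT u v x -> x != u ->
  G x / (2 * INR M) <= noret (comp_nbrs nbT u v) u n x.
Proof.
have hK := KM.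
elim: n x => [|n IH] x hc hxu.
  rewrite /=; have := G_bound hc => hb.
  apply: (Rmult_le_reg_r (2 * INR M)) => //.
  rewrite /Rdiv Rmult_assoc Rinv_l; lra.
change (noret (comp_nbrs nbT u v) u n.+1 x) with
  (/ INR (size (comp_nbrs nbT u v x)) *
   sumR (fun y => if y == u then 0 else noret (comp_nbrs nbT u v) u n y)
     (comp_nbrs nbT u v x)).
rewrite (comp_full hc hxu).
have h1 : sumR (fun y => G y * / (2 * INR M)) (nbT x) <=
    sumR (fun y => if y == u then 0 else noret (comp_nbrs nbT u v) u n y) (nbT x).
  apply: sumR_le => y hy; case: (eqVneq y u) => [->|hyu].
    by rewrite Gu; lra.
  apply: IH => //; apply: (comp_ext hc hy).
  apply/negP => /eqP hyv; move: (comp_notv HsT HacT Huv hc hxu); by rewrite -hyv hy.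
rewrite sumR_scale in h1.
have h2 := sum_ineq hc hxu.
have hd := deg2 x.
have hn : 0 < INR (size (nbT x)) by apply: lt_0_INR; apply/ltP; lia.
apply: Rle_trans (Rmult_le_compat_l _ _ _ (Rlt_le _ _ (Rinv_0_lt_compat _ hn)) h1).
have h3 : INR (size (nbT x)) * G x * / (2 * INR M) <= sumR G (nbT x) * / (2 * INR M).
  apply: Rmult_le_compat_r => //; apply: Rlt_le; exact: Rinv_0_lt_compat.
apply: Rle_trans (Rmult_le_compat_l _ _ _ (Rlt_le _ _ (Rinv_0_lt_compat _ hn)) h3).
right; field; split; lra.
Qed.

Lemma final n : / (4 * INR M) <= noret (comp_nbrs nbT u v) u n u.
Proof.
have hK := KM.
case: n => [|n].
  rewrite /=; have hM1 : 1 <= INR M by apply: (le_INR 1); apply/leP.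
  rewrite -Rinv_1; apply: Rinv_le_contravar; lra.
change (noret (comp_nbrs nbT u v) u n.+1 u) with
  (/ INR (size (comp_nbrs nbT u v u)) *
   sumR (fun y => if y == u then 0 else noret (comp_nbrs nbT u v) u n y)
     (comp_nbrs nbT u v u)).
set s := comp_nbrs nbT u v u.
have hs : forall y, y \in s -> / (4 * INR M) <= (if y == u then 0 else noret (comp_nbrs nbT u v) u n y).
  move=> y; rewrite mem_filter => /andP[/pboolP hyc hy].
  have hyu : y != u.
    apply/negP => /eqP hyu; move: hy; rewrite hyu; exact: (negP (proj2 (proj2 HsT) u)).
  have hyv : y != v by apply/negP => /eqP hyv; move: hyc; rewrite hyv; exact: v_notcomp.
  rewrite (negbTE hyu).
  apply: Rle_trans (claim n hyc hyu).
  rewrite /G (pi_child_u HsT HacT Huv hy hyv) /=.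
  have : (/2) ^ (0 + ph u) >= /2 by case: (ph u) => /=; lra.
  move=> hge.
  have -> : / (4 * INR M) = / 2 * / (2 * INR M) by field; lra.
  rewrite /Rdiv; apply: Rmult_le_compat_r; [apply: Rlt_le; exact: Rinv_0_lt_compat|lra].
have [y [hy hyv]] : exists y, y \in nbT u /\ y != v.
  case: (boolP (has (fun y => y != v) (nbT u))) => [/hasP [y hy hyv]|/hasPn hall].
    by exists y.
  have : (size (nbT u) <= size [:: v])%N.
    apply: uniq_leq_size; first by case: HsT.
    move=> z hz; move: (hall z hz); rewrite negbK inE => ->.
    done.
  have := deg2 u; simpl size; lia.
have hys : y \in s.
  rewrite mem_filter hy andbT; apply/pboolP.
  apply: (comp_ext comp_u hy hyv).
have hsz : (0 < size s)%N by case: (s) hys.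
have hn : 0 < INR (size s) by apply: lt_0_INR; apply/ltP.
have := sumR_const_ge hs.
move=> h.
apply: Rle_trans (Rmult_le_compat_l _ _ _ (Rlt_le _ _ (Rinv_0_lt_compat _ hn)) h).
right; field; split; lra.
Qed.

End Main.


End P3.
Import P3.

Theorem mainTheorem9 (M : nat) (hM : (0 < M)%N) :
  exists c : R, (0 < c)%R /\
    forall (W V : eqType) (nbS : W -> seq W) (nbT : V -> seq V),
      is_tree nbS -> (forall a, (3 <= size (nbS a))%N) ->
      is_tree nbT -> bounded_subdivision M nbS nbT ->
      forall u v : V, v \in nbT u ->
        Rbar_le (Finite c) (escape_prob (comp_nbrs nbT u v) u).
Proof.
exists (/ (4 * INR M))%R; split.
  apply: Rinv_0_lt_compat; have := lt_0_INR M (elimT ltP hM); lra.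
move=> W V nbS nbT [HsS _] HdS [HsT [_ HacT]] [phi [P [Hinj [H1 [H2 [H3 H4]]]]]] u v Huv.
rewrite /escape_prob -Lim_seq_const.
apply: Lim_seq_le_loc; exists 0%N => n _.
exact: (final hM HsS HdS HsT HacT Hinj H1 H2 H3 H4 Huv n).
Qed.
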